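(* Let $0<\alpha\le2$, $j\ne0$, $V\in C^2(\mathbb{T})$, and real numbers $p_1,\dots,p_n\ge0$, $q_1,\dots,q_n$ with $p_k^2+q_k^2>0$ for $1\le k\le n$. If $(c_1,d_1),(c_2,d_2)\in\mathcal{C}$ both solve the system (S), then $(c_1,d_1)=(c_2,d_2)$.
   Context: $\mathbb{T}=\mathbb{R}/\mathbb{Z}$. Set $c_j=(j^2/2)^{1/\alpha}$; $\phi_\alpha(t)=\frac{c_j\alpha}{\alpha-1}t^{(\alpha-1)/\alpha}$ if $\alpha\ne1$, $\phi_\alpha(t)=c_j\ln t$ if $\alpha=1$ ($t>0$). $\mathcal{C}\subset\mathbb{R}^{2n+1}$ is the set of $(a_0,\dots,a_n,b_1,\dots,b_n)$ with $a_0+\sum_{k=1}^n(a_k\cos(2\pi kx)+b_k\sin(2\pi kx))-V(x)>0$ for all $x\in\mathbb{T}$; on $\mathcal{C}$, $\Phi_\alpha(a_0,\dots,b_n)=\int_{\mathbb{T}}\phi_\alpha\big(a_0+\sum_{k=1}^n(a_k\cos(2\pi ky)+b_k\sin(2\pi ky))-V(y)\big)\,dy$. System (S): $\partial\Phi_\alpha/\partial a_0=1$, $\partial\Phi_\alpha/\partial a_k=\frac{p_ka_k+q_kb_k}{p_k^2+q_k^2}$, $\partial\Phi_\alpha/\partial b_k=\frac{p_kb_k-q_ka_k}{p_k^2+q_k^2}$ for $1\le k\le n$. *)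

(* Defs.v *)
From Stdlib Require Import Reals Lra ClassicalEpsilon.
Open Scope R_scope.

(* Riemann integral of f over [a,b], as a total function: the value of
   RiemannInt for any integrability proof (independent of the proof, by
   RiemannInt_P5); arbitrary if f is not Riemann integrable. *)
Definition Rint (f : R -> R) (a b : R) : R :=
  epsilon (inhabits 0)
    (fun I => exists pr : Riemann_integrable f a b, RiemannInt pr = I).

(* V is of class C^2 on R (and 1-periodic: a C^2 function on T = R/Z). *)
Definition C2_torus (V : R -> R) : Prop :=
  (forall x, V (x + 1) = V x) /\
  exists V1 V2 : R -> R,
    (forall x, derivable_pt_lim V x (V1 x)) /\
    (forall x, derivable_pt_lim V1 x (V2 x)) /\
    continuity V2.

Definition cj (alpha j : R) : R := Rpower (j ^ 2 / 2) (1 / alpha).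

(* phi_alpha(t) for t > 0 (values for t <= 0 are irrelevant) *)
Definition phi (alpha j t : R) : R :=
  if Req_EM_T alpha 1 then cj alpha j * ln t
  else cj alpha j * alpha / (alpha - 1) * Rpower t ((alpha - 1) / alpha).

(* a : coefficients a_0..a_n, b : coefficients b_1..b_n (other indices unused).
   trig n a b y = a_0 + sum_{k=1}^n (a_k cos(2 pi k y) + b_k sin(2 pi k y)) *)
Fixpoint trigsum (n : nat) (a b : nat -> R) (y : R) : R :=
  match n with
  | O => 0
  | S m => trigsum m a b y
           + (a (S m) * cos (2 * PI * INR (S m) * y)
              + b (S m) * sin (2 * PI * INR (S m) * y))
  end.

Definition trig (n : nat) (a b : nat -> R) (y : R) : R := a O + trigsum n a b y.

Definition inC (n : nat) (V : R -> R) (a b : nat -> R) : Prop :=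
  forall x : R, trig n a b x - V x > 0.

Definition Phi (alpha j : R) (n : nat) (V : R -> R) (a b : nat -> R) : R :=
  Rint (fun y => phi alpha j (trig n a b y - V y)) 0 1.

Definition upd (a : nat -> R) (k : nat) (x : R) : nat -> R :=
  fun i => if Nat.eqb i k then x else a i.

Definition solves_S (alpha j : R) (n : nat) (V : R -> R) (p q : nat -> R)
  (a b : nat -> R) : Prop :=
  derivable_pt_lim (fun t => Phi alpha j n V (upd a O (a O + t)) b) 0 1 /\
  (forall k, (1 <= k <= n)%nat ->
     derivable_pt_lim (fun t => Phi alpha j n V (upd a k (a k + t)) b) 0
       ((p k * a k + q k * b k) / (p k ^ 2 + q k ^ 2))) /\
  (forall k, (1 <= k <= n)%nat ->
     derivable_pt_lim (fun t => Phi alpha j n V a (upd b k (b k + t))) 0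
       ((p k * b k - q k * a k) / (p k ^ 2 + q k ^ 2))).

(* Main.v *)
Require Import Defs.
From Stdlib Require Import Reals Lra Lia Psatz ClassicalEpsilon FunctionalExtensionality.
From Coquelicot Require Import Coquelicot.
Open Scope R_scope.

Definition dphi (alpha j z : R) : R := cj alpha j / Rpower z (1 / alpha).

Lemma cj_pos alpha j : 0 < cj alpha j.
Proof. unfold cj, Rpower. apply exp_pos. Qed.

Lemma phi_deriv alpha j z : 0 < alpha -> 0 < z ->
  is_derive (phi alpha j) z (dphi alpha j z).
Proof.
  intros Ha Hz. apply is_derive_Reals. unfold phi, dphi.
  destruct (Req_EM_T alpha 1) as [E|E].
  - subst alpha. replace (1/1) with 1 by field. rewrite Rpower_1 by lra.
    replace (cj 1 j / z) with (cj 1 j * / z) by (unfold Rdiv; ring).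
    apply derivable_pt_lim_scal with (f := ln). now apply derivable_pt_lim_ln.
  - set (e := (alpha - 1)/alpha).
    replace (cj alpha j / Rpower z (1 / alpha)) with
      (cj alpha j * alpha / (alpha - 1) * (e * Rpower z (e - 1))).
    + apply derivable_pt_lim_scal with (f := fun t => Rpower t e).
      now apply derivable_pt_lim_power.
    + unfold e. replace ((alpha - 1) / alpha - 1) with (- (1/alpha)) by (field; lra).
      rewrite Rpower_Ropp. assert (0 < Rpower z (1/alpha)) by (unfold Rpower; apply exp_pos).
      assert (alpha - 1 <> 0) by (intro; apply E; lra).
      field. lra.
Qed.

Lemma Rpower_pos x y : 0 < Rpower x y.
Proof. unfold Rpower; apply exp_pos. Qed.

Lemma dphi_cont alpha j z : 0 < alpha -> 0 < z -> continuity_pt (dphi alpha j) z.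
Proof.
  intros Ha Hz. unfold dphi.
  apply continuity_pt_mult. apply continuity_pt_const; intros ??; reflexivity.
  apply continuity_pt_inv. 2: apply Rgt_not_eq, Rpower_pos.
  apply derivable_continuous_pt. exists ((1/alpha) * Rpower z (1/alpha - 1)).
  apply derivable_pt_lim_power; auto.
Qed.

Lemma phi_cont alpha j z : 0 < alpha -> 0 < z -> continuity_pt (phi alpha j) z.
Proof.
  intros Ha Hz. apply derivable_continuous_pt. exists (dphi alpha j z).
  apply is_derive_Reals, phi_deriv; auto.
Qed.

Lemma dphi_decr alpha j x y : 0 < alpha -> 0 < x < y -> dphi alpha j y < dphi alpha j x.
Proof.
  intros Ha H. unfold dphi, Rdiv. apply Rmult_lt_compat_l. apply cj_pos.
  apply Rinv_lt_contravar. apply Rmult_lt_0_compat; apply Rpower_pos.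
  apply Rlt_Rpower_l; [|lra]. apply Rdiv_lt_0_compat; lra.
Qed.

Lemma dphi_mono alpha j x y : 0 < alpha -> 0 < x -> 0 < y ->
  (dphi alpha j x - dphi alpha j y) * (x - y) <= 0 /\
  ((dphi alpha j x - dphi alpha j y) * (x - y) = 0 -> x = y).
Proof.
  intros Ha Hx Hy. destruct (Rtotal_order x y) as [H|[H|H]].
  - pose proof (dphi_decr alpha j x y Ha (conj Hx H)). split; intros; nra.
  - subst. split; intros; [lra|auto].
  - pose proof (dphi_decr alpha j y x Ha (conj Hy H)). split; intros; nra.
Qed.

Lemma Rint_RInt f a b : Riemann_integrable f a b -> Rint f a b = RInt f a b.
Proof.
  intros pr. unfold Rint.
  destruct (epsilon_spec (inhabits 0)
    (fun I => exists pr : Riemann_integrable f a b, RiemannInt pr = I)) as [pr' Hp].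
  { exists (RiemannInt pr). now exists pr. }
  rewrite <- Hp. symmetry. apply RInt_Reals.
Qed.

Lemma cont_cont f x : continuity_pt f x -> continuous f x.
Proof. intros H. now apply continuity_pt_filterlim. Qed.

Lemma trigsum_ext n a b a' b' y :
  (forall i, (1 <= i <= n)%nat -> a' i = a i /\ b' i = b i) ->
  trigsum n a' b' y = trigsum n a b y.
Proof.
  induction n; intros H; simpl; auto.
  rewrite IHn by (intros i Hi; apply H; lia).
  destruct (H (S n)) as [-> ->]; [lia|]. reflexivity.
Qed.

Lemma trigsum_upd_a n a b k v y : (1 <= k <= n)%nat ->
  trigsum n (upd a k v) b y = trigsum n a b y + (v - a k) * cos (2 * PI * INR k * y).
Proof.
  induction n; intros Hk; [lia|]. cbn [trigsum].
  destruct (Nat.eq_dec k (S n)) as [->|Hne].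
  - rewrite (trigsum_ext n a b).
    2:{ intros i Hi. unfold upd. split; auto. destruct (Nat.eqb_spec i (S n)); [lia|auto]. }
    unfold upd. rewrite Nat.eqb_refl. ring.
  - rewrite IHn by lia. unfold upd at 1.
    destruct (Nat.eqb_spec (S n) k); [lia|]. ring.
Qed.

Lemma trigsum_upd_b n a b k v y : (1 <= k <= n)%nat ->
  trigsum n a (upd b k v) y = trigsum n a b y + (v - b k) * sin (2 * PI * INR k * y).
Proof.
  induction n; intros Hk; [lia|]. cbn [trigsum].
  destruct (Nat.eq_dec k (S n)) as [->|Hne].
  - rewrite (trigsum_ext n a b).
    2:{ intros i Hi. unfold upd. split; auto. destruct (Nat.eqb_spec i (S n)); [lia|auto]. }
    unfold upd. rewrite Nat.eqb_refl. ring.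
  - rewrite IHn by lia. unfold upd at 1.
    destruct (Nat.eqb_spec (S n) k); [lia|]. ring.
Qed.

Lemma trigsum_sub n a b a' b' y :
  trigsum n (fun i => a i - a' i) (fun i => b i - b' i) y = trigsum n a b y - trigsum n a' b' y.
Proof. induction n; simpl; [ring|]. rewrite IHn. ring. Qed.

Lemma trigsum_cont n a b y : continuity_pt (trigsum n a b) y.
Proof.
  induction n; simpl.
  - apply continuity_pt_const. intros ??; reflexivity.
  - apply (continuity_pt_plus (trigsum n a b)); auto.
    apply continuity_pt_plus; apply continuity_pt_mult;
      try (apply continuity_pt_const; intros ??; reflexivity).
    + apply (continuity_pt_comp (fun y => 2 * PI * INR (S n) * y) cos).
      * apply continuity_pt_mult. apply continuity_pt_const; intros ??; reflexivity. apply continuity_pt_id.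
      * apply continuity_cos.
    + apply (continuity_pt_comp (fun y => 2 * PI * INR (S n) * y) sin).
      * apply continuity_pt_mult. apply continuity_pt_const; intros ??; reflexivity. apply continuity_pt_id.
      * apply continuity_sin.
Qed.

Lemma ball_R (e u : R) : ball (0:R) e u -> Rabs u < e.
Proof.
  intros H. unfold ball in H; simpl in H. unfold AbsRing_ball, abs, minus, plus, opp in H; simpl in H.
  rewrite Ropp_0, Rplus_0_r in H. exact H.
Qed.

Lemma cpt_const (k x : R) : continuity_pt (fun _ => k) x.
Proof. apply continuity_pt_const; intros ??; reflexivity. Qed.

Lemma key alpha j F c L : 0 < alpha -> (forall s, 0 < F s) ->
  (forall s, continuity_pt F s) -> (forall s, continuity_pt c s) ->
  derivable_pt_lim (fun t => Rint (fun y => phi alpha j (F y + t * c y)) 0 1) 0 L ->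
  L = RInt (fun y => dphi alpha j (F y) * c y) 0 1.
Proof.
  intros Ha HF HFc Hcc Hyp.
  destruct (continuity_ab_min F (-1) 2) as [mx [Hmx _]]; [lra| intros; auto |].
  set (m := F mx) in *. assert (Hm : 0 < m) by apply HF.
  destruct (continuity_ab_min (fun s => - Rabs (c s)) (-1) 2) as [Mx [HMx _]]; [lra| |].
  { intros s _. apply continuity_pt_opp. apply (continuity_pt_comp c Rabs); auto.
    apply Rcontinuity_abs. }
  set (C := Rabs (c Mx)) in *.
  assert (HC : forall s, -1 <= s <= 2 -> Rabs (c s) <= C) by (intros s Hs; specialize (HMx s Hs); lra).
  assert (HC0 : 0 <= C) by apply Rabs_pos.
  set (d := m / (2 * (C + 1))).
  assert (Hd : 0 < d) by (unfold d; apply Rdiv_lt_0_compat; lra).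
  assert (Hpos : forall u s, Rabs u < d -> -1 <= s <= 2 -> m / 2 < F s + u * c s).
  { intros u s Hu Hs. specialize (HC s Hs). specialize (Hmx s Hs).
    assert (Habs : Rabs (u * c s) < m / 2).
    { rewrite Rabs_mult.
      assert (Rabs u * Rabs (c s) <= d * C).
      { apply Rmult_le_compat; try apply Rabs_pos; lra. }
      assert (d * C < m / 2).
      { unfold d. apply Rmult_lt_reg_r with (2 * (C + 1)); [lra|].
        field_simplify; [nra|lra]. }
      lra. }
    pose proof (Rle_abs (- (u * c s))). rewrite Rabs_Ropp in H. lra. }
  set (f := fun u t => phi alpha j (F t + u * c t)).
  assert (Hder : forall u t, 0 < F t + u * c t ->
    is_derive (fun z => f z t) u (dphi alpha j (F t + u * c t) * c t)).
  { intros u t Hp. unfold f.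
    assert (Hi : is_derive (fun z => F t + z * c t) u (c t)).
    { auto_derive; auto; ring. }
    pose proof (is_derive_comp (phi alpha j) (fun z => F t + z * c t) u _ _
      (phi_deriv alpha j _ Ha Hp) Hi) as H.
    unfold scal in H; simpl in H; unfold mult in H; simpl in H.
    rewrite Rmult_comm in H. exact H. }
  assert (HD : is_derive (fun u => RInt (f u) 0 1) 0
                 (RInt (fun t => Derive (fun u => f u t) 0) 0 1)).
  { apply is_derive_RInt_param.
    - exists (mkposreal d Hd). intros u Hu t Ht. apply ball_R in Hu. simpl in Hu.
      rewrite Rmin_left, Rmax_right in Ht by lra.
      eexists. apply Hder. specialize (Hpos u t Hu ltac:(lra)). lra.
    - intros t Ht. rewrite Rmin_left, Rmax_right in Ht by lra.
      apply continuity_2d_pt_ext_loc with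
        (f := fun u v => dphi alpha j (F v + u * c v) * c v).
      + assert (Hd1 : 0 < Rmin d 1) by (apply Rmin_glb_lt; lra).
        exists (mkposreal _ Hd1). intros u v Hu Hv. simpl in Hu, Hv.
        rewrite Rminus_0_r in Hu.
        assert (Rabs u < d) by (pose proof (Rmin_l d 1); lra).
        assert (Rabs (v - t) < 1) by (pose proof (Rmin_r d 1); lra).
        assert (-1 <= v <= 2).
        { apply Rabs_def2 in H0. lra. }
        symmetry. apply is_derive_unique. apply Hder.
        specialize (Hpos u v H H1). lra.
      + apply continuity_2d_pt_mult.
        * apply continuity_1d_2d_pt_comp.
          -- apply dphi_cont; auto. rewrite Rmult_0_l, Rplus_0_r. auto.
          -- apply continuity_2d_pt_plus.
             ++ apply (continuity_1d_2d_pt_comp F (fun u v => v)); auto.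
                apply continuity_2d_pt_id2.
             ++ apply continuity_2d_pt_mult. apply continuity_2d_pt_id1.
                apply (continuity_1d_2d_pt_comp c (fun u v => v)); auto.
                apply continuity_2d_pt_id2.
        * apply (continuity_1d_2d_pt_comp c (fun u v => v)); auto.
          apply continuity_2d_pt_id2.
    - exists (mkposreal d Hd). intros u Hu. apply ball_R in Hu. simpl in Hu.
      apply (ex_RInt_continuous (V := R_CompleteNormedModule)). intros z Hz. rewrite Rmin_left, Rmax_right in Hz by lra.
      apply cont_cont. unfold f.
      apply (continuity_pt_comp (fun y => F y + u * c y) (phi alpha j)).
      + apply continuity_pt_plus; auto. apply continuity_pt_mult; auto. apply cpt_const.
      + apply phi_cont; auto. specialize (Hpos u z Hu ltac:(lra)). lra. }
  assert (HL : is_derive (fun u => RInt (f u) 0 1) 0 L).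
  { apply is_derive_Reals in Hyp.
    apply is_derive_ext_loc with (2 := Hyp).
    exists (mkposreal d Hd). intros u Hu. apply ball_R in Hu. simpl in Hu.
    apply Rint_RInt. apply continuity_implies_RiemannInt; [lra|].
    intros z Hz.
    apply (continuity_pt_comp (fun y => F y + u * c y) (phi alpha j)).
    + apply continuity_pt_plus; auto. apply continuity_pt_mult; auto. apply cpt_const.
    + apply phi_cont; auto. specialize (Hpos u z Hu ltac:(lra)). lra. }
  apply is_derive_unique in HD. apply is_derive_unique in HL.
  rewrite <- HL, HD. apply RInt_ext. intros x Hx.
  apply is_derive_unique. pose proof (Hder 0 x) as H.
  rewrite Rmult_0_l, Rplus_0_r in H. apply H. auto.
Qed.

Lemma RInt_pos_pt g x0 : (forall x, continuity_pt g x) -> (forall x, 0 <= g x) ->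
  0 < x0 < 1 -> 0 < g x0 -> 0 < RInt g 0 1.
Proof.
  intros Hc Hg Hx Hgx.
  assert (Hex : forall a b, ex_RInt g a b).
  { intros a b. apply (ex_RInt_continuous (V := R_CompleteNormedModule)). intros; apply cont_cont; auto. }
  destruct (Hc x0 (g x0 / 2)) as [dl [Hdl Hd]]; [lra|].
  set (e := Rmin (dl/2) (Rmin (x0/2) ((1-x0)/2))).
  assert (He : 0 < e) by (unfold e; repeat apply Rmin_glb_lt; lra).
  assert (He1 : e <= dl/2) by apply Rmin_l.
  assert (He2 : e <= x0/2) by (unfold e; eapply Rle_trans; [apply Rmin_r|apply Rmin_l]).
  assert (He3 : e <= (1-x0)/2) by (unfold e; eapply Rle_trans; [apply Rmin_r|apply Rmin_r]).
  rewrite <- (RInt_Chasles g 0 (x0 - e) 1) by auto.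
  rewrite <- (RInt_Chasles g (x0 - e) (x0 + e) 1) by auto.
  unfold plus; simpl.
  assert (0 <= RInt g 0 (x0 - e)) by (apply RInt_ge_0; auto; lra).
  assert (0 <= RInt g (x0 + e) 1) by (apply RInt_ge_0; auto; lra).
  assert (0 < RInt g (x0 - e) (x0 + e)).
  { apply RInt_gt_0; [lra| |intros; apply cont_cont; auto].
    intros x Hxx. destruct (Req_dec x x0) as [->|Hne]; [lra|].
    assert (Hdist : R_dist x x0 < dl).
    { unfold R_dist. apply Rabs_def1; lra. }
    assert (Hnc : D_x no_cond x0 x) by (split; [exact I| auto]).
    specialize (Hd x (conj Hnc Hdist)). simpl in Hd; unfold R_dist in Hd.
    apply Rabs_def2 in Hd. lra. }
  lra.
Qed.

Lemma sol_eqs alpha j n V p q a b : 0 < alpha ->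
  (forall s, continuity_pt V s) -> inC n V a b -> solves_S alpha j n V p q a b ->
  let F := fun y => trig n a b y - V y in
  1 = RInt (fun y => dphi alpha j (F y) * 1) 0 1 /\
  (forall k, (1 <= k <= n)%nat -> (p k * a k + q k * b k) / (p k ^ 2 + q k ^ 2) =
       RInt (fun y => dphi alpha j (F y) * cos (2 * PI * INR k * y)) 0 1) /\
  (forall k, (1 <= k <= n)%nat -> (p k * b k - q k * a k) / (p k ^ 2 + q k ^ 2) =
       RInt (fun y => dphi alpha j (F y) * sin (2 * PI * INR k * y)) 0 1).
Proof.
  intros Ha HV HC [H0 [Ha' Hb']] F.
  assert (HFp : forall s, 0 < F s) by (intros s; unfold F; specialize (HC s); lra).
  assert (HFc : forall s, continuity_pt F s).
  { intros s. unfold F. apply continuity_pt_minus; auto. unfold trig.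
    apply continuity_pt_plus. apply cpt_const. apply trigsum_cont. }
  assert (Hcos : forall k s, continuity_pt (fun y => cos (2 * PI * INR k * y)) s).
  { intros k s. apply (continuity_pt_comp (fun y => 2 * PI * INR k * y) cos).
    apply continuity_pt_mult. apply cpt_const. apply continuity_pt_id. apply continuity_cos. }
  assert (Hsin : forall k s, continuity_pt (fun y => sin (2 * PI * INR k * y)) s).
  { intros k s. apply (continuity_pt_comp (fun y => 2 * PI * INR k * y) sin).
    apply continuity_pt_mult. apply cpt_const. apply continuity_pt_id. apply continuity_sin. }
  split; [|split].
  - apply (key alpha j F (fun _ => 1)); auto. intros; apply cpt_const.
    assert (E : (fun t => Phi alpha j n V (upd a O (a O + t)) b) =
                (fun t => Rint (fun y => phi alpha j (F y + t * 1)) 0 1)).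
    { apply functional_extensionality; intros t. unfold Phi. f_equal.
      apply functional_extensionality; intros y. unfold F, trig.
      rewrite (trigsum_ext n a b).
      2:{ intros i Hi. unfold upd. destruct (Nat.eqb_spec i 0); [lia|auto]. }
      unfold upd; simpl. f_equal. ring. }
    rewrite <- E. exact H0.
  - intros k Hk. apply (key alpha j F (fun y => cos (2 * PI * INR k * y))); auto.
    assert (E : (fun t => Phi alpha j n V (upd a k (a k + t)) b) =
                (fun t => Rint (fun y => phi alpha j (F y + t * cos (2 * PI * INR k * y))) 0 1)).
    { apply functional_extensionality; intros t. unfold Phi. f_equal.
      apply functional_extensionality; intros y. unfold F, trig.
      rewrite trigsum_upd_a by auto.
      unfold upd at 1. destruct (Nat.eqb_spec 0 k); [lia|]. f_equal. ring. }
    rewrite <- E. exact (Ha' k Hk).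
  - intros k Hk. apply (key alpha j F (fun y => sin (2 * PI * INR k * y))); auto.
    assert (E : (fun t => Phi alpha j n V a (upd b k (b k + t))) =
                (fun t => Rint (fun y => phi alpha j (F y + t * sin (2 * PI * INR k * y))) 0 1)).
    { apply functional_extensionality; intros t. unfold Phi. f_equal.
      apply functional_extensionality; intros y. unfold F, trig.
      rewrite trigsum_upd_b by auto. f_equal. ring. }
    rewrite <- E. exact (Hb' k Hk).
Qed.

Lemma exc f : (forall x, continuity_pt f x) -> ex_RInt f 0 1.
Proof. intros H. apply (ex_RInt_continuous (V := R_CompleteNormedModule)). intros; apply cont_cont; auto. Qed.

Theorem proposition4p2 (alpha j : R) (n : nat) (V : R -> R) (p q : nat -> R)
  (c1 d1 c2 d2 : nat -> R) :
  0 < alpha <= 2 ->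
  j <> 0 ->
  C2_torus V ->
  (forall k, (1 <= k <= n)%nat -> 0 <= p k) ->
  (forall k, (1 <= k <= n)%nat -> p k ^ 2 + q k ^ 2 > 0) ->
  inC n V c1 d1 -> inC n V c2 d2 ->
  solves_S alpha j n V p q c1 d1 ->
  solves_S alpha j n V p q c2 d2 ->
  (forall k, (k <= n)%nat -> c1 k = c2 k) /\
  (forall k, (1 <= k <= n)%nat -> d1 k = d2 k).
Proof.
  intros [Ha _] _ [_ [V1 [V2 [HV1 _]]]] Hp HN HC1 HC2 HS1 HS2.
  assert (HVc : forall s, continuity_pt V s).
  { intros s. apply derivable_continuous_pt. exists (V1 s). apply HV1. }
  pose proof (sol_eqs alpha j n V p q c1 d1 Ha HVc HC1 HS1) as [E10 [E1a E1b]].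
  pose proof (sol_eqs alpha j n V p q c2 d2 Ha HVc HC2 HS2) as [E20 [E2a E2b]].
  set (F1 := fun y => trig n c1 d1 y - V y) in *.
  set (F2 := fun y => trig n c2 d2 y - V y) in *.
  assert (HF1 : forall s, 0 < F1 s) by (intros s; unfold F1; specialize (HC1 s); lra).
  assert (HF2 : forall s, 0 < F2 s) by (intros s; unfold F2; specialize (HC2 s); lra).
  assert (HF1c : forall s, continuity_pt F1 s).
  { intros s. unfold F1. apply continuity_pt_minus; auto. unfold trig.
    apply continuity_pt_plus. apply cpt_const. apply trigsum_cont. }
  assert (HF2c : forall s, continuity_pt F2 s).
  { intros s. unfold F2. apply continuity_pt_minus; auto. unfold trig.
    apply continuity_pt_plus. apply cpt_const. apply trigsum_cont. }
  assert (Hd1 : forall s, continuity_pt (fun y => dphi alpha j (F1 y)) s).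
  { intros s. apply (continuity_pt_comp F1 (dphi alpha j)); auto. apply dphi_cont; auto. }
  assert (Hd2 : forall s, continuity_pt (fun y => dphi alpha j (F2 y)) s).
  { intros s. apply (continuity_pt_comp F2 (dphi alpha j)); auto. apply dphi_cont; auto. }
  assert (Hcos : forall k s, continuity_pt (fun y => cos (2 * PI * INR k * y)) s).
  { intros k s. apply (continuity_pt_comp (fun y => 2 * PI * INR k * y) cos).
    apply continuity_pt_mult. apply cpt_const. apply continuity_pt_id. apply continuity_cos. }
  assert (Hsin : forall k s, continuity_pt (fun y => sin (2 * PI * INR k * y)) s).
  { intros k s. apply (continuity_pt_comp (fun y => 2 * PI * INR k * y) sin).
    apply continuity_pt_mult. apply cpt_const. apply continuity_pt_id. apply continuity_sin. }
  set (G := fun y => dphi alpha j (F1 y) - dphi alpha j (F2 y)).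
  assert (HGc : forall s, continuity_pt G s) by (intros; apply continuity_pt_minus; auto).
  set (ha := fun i => c1 i - c2 i). set (hb := fun i => d1 i - d2 i).
  assert (Hsum : forall m, (m <= n)%nat -> 0 <= RInt (fun y => G y * trigsum m ha hb y) 0 1).
  { induction m as [|m IH]; intros Hm.
    - rewrite (RInt_ext _ (fun _ => 0)). 2:{ intros; simpl; ring. }
      rewrite RInt_const. unfold scal; simpl; unfold mult; simpl. lra.
    - cbn [trigsum]. remember (INR (S m)) as K eqn:HK.
      rewrite (RInt_ext _ (fun y => plus (G y * trigsum m ha hb y)
         (plus (scal (ha (S m)) (minus (dphi alpha j (F1 y) * cos (2 * PI * K * y))
                                       (dphi alpha j (F2 y) * cos (2 * PI * K * y))))
               (scal (hb (S m)) (minus (dphi alpha j (F1 y) * sin (2 * PI * K * y))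
                                       (dphi alpha j (F2 y) * sin (2 * PI * K * y))))))).
      2:{ intros. unfold minus, plus, scal, opp, mult; simpl. unfold plus, mult; simpl. unfold G. ring. }
      assert (Hc1 : forall x, continuity_pt (fun y => cos (2 * PI * K * y)) x) by (subst K; auto).
      assert (Hs1 : forall x, continuity_pt (fun y => sin (2 * PI * K * y)) x) by (subst K; auto).
      rewrite (RInt_plus (V:=R_CompleteNormedModule)), (RInt_plus (V:=R_CompleteNormedModule)), (RInt_scal (V:=R_CompleteNormedModule)), (RInt_scal (V:=R_CompleteNormedModule)), (RInt_minus (V:=R_CompleteNormedModule)), (RInt_minus (V:=R_CompleteNormedModule));
        try (apply exc; intros s; unfold minus, plus, scal, opp, mult; simpl; unfold plus, mult; simpl;
             repeat match goal with
             | |- continuity_pt (fun x => _ + _) _ => apply continuity_pt_plus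
             | |- continuity_pt (fun x => _ * _) _ => apply continuity_pt_mult
             | |- continuity_pt (fun x => - _) _ => apply continuity_pt_opp
             end; auto; try apply cpt_const; apply trigsum_cont).
      subst K. unfold F1, F2. rewrite <- (E1a (S m)), <- (E2a (S m)), <- (E1b (S m)), <- (E2b (S m)) by lia.
      specialize (IH ltac:(lia)).
      unfold minus, plus, scal, opp, mult; simpl; unfold plus, mult; simpl.
      specialize (Hp (S m) ltac:(lia)). specialize (HN (S m) ltac:(lia)).
      set (P := p (S m)) in *. set (Q := q (S m)) in *.
      assert (HN' : P * (P * 1) + Q * (Q * 1) > 0) by (simpl in HN; lra).
      match goal with |- 0 <= ?A + ?B =>
        assert (Halg : B = P * (ha (S m) ^ 2 + hb (S m) ^ 2) / (P * (P * 1) + Q * (Q * 1)))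
          by (unfold ha, hb; field; lra) end.
      rewrite Halg. assert (0 <= P * (ha (S m) ^ 2 + hb (S m) ^ 2) / (P * (P * 1) + Q * (Q * 1))).
      { apply Rdiv_le_0_compat; [|lra]. apply Rmult_le_pos; [lra|nra]. }
      lra. }
  assert (Htot : 0 <= RInt (fun y => G y * (F1 y - F2 y)) 0 1).
  { rewrite (RInt_ext _ (fun y => plus (scal (ha 0%nat) (minus (dphi alpha j (F1 y) * 1)
        (dphi alpha j (F2 y) * 1))) (G y * trigsum n ha hb y))).
    2:{ intros. unfold minus, plus, scal, opp, mult; simpl. unfold plus, mult; simpl.
        unfold G, ha, hb. rewrite trigsum_sub. unfold F1, F2, trig. ring. }
    rewrite (RInt_plus (V:=R_CompleteNormedModule)), (RInt_scal (V:=R_CompleteNormedModule)),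
      (RInt_minus (V:=R_CompleteNormedModule));
        try (apply exc; intros s; unfold minus, plus, scal, opp, mult; simpl; unfold plus, mult; simpl;
             repeat match goal with
             | |- continuity_pt (fun x => _ + _) _ => apply continuity_pt_plus
             | |- continuity_pt (fun x => _ * _) _ => apply continuity_pt_mult
             | |- continuity_pt (fun x => - _) _ => apply continuity_pt_opp
             end; auto; try apply cpt_const; apply trigsum_cont).
    unfold F1, F2. rewrite <- E10, <- E20.
    specialize (Hsum n (le_n n)).
    unfold minus, plus, scal, opp, mult; simpl; unfold plus, mult; simpl. lra. }
  assert (Heq : forall x, 0 < x < 1 -> F1 x = F2 x).
  { intros x Hx. destruct (Req_dec (F1 x) (F2 x)) as [|Hne]; auto. exfalso.
    assert (Hg : forall y, 0 <= - (G y * (F1 y - F2 y))).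
    { intros y. destruct (dphi_mono alpha j (F1 y) (F2 y) Ha (HF1 y) (HF2 y)). unfold G. lra. }
    assert (Hgx : 0 < - (G x * (F1 x - F2 x))).
    { destruct (dphi_mono alpha j (F1 x) (F2 x) Ha (HF1 x) (HF2 x)) as [H1 H2]. unfold G.
      destruct (Req_dec ((dphi alpha j (F1 x) - dphi alpha j (F2 x)) * (F1 x - F2 x)) 0) as [H3|H3].
      - exfalso. apply Hne, H2, H3.
      - lra. }
    pose proof (RInt_pos_pt (fun y => - (G y * (F1 y - F2 y))) x) as Hpos.
    rewrite (RInt_ext _ (fun y => opp (G y * (F1 y - F2 y)))) in Hpos by (intros; reflexivity).
    rewrite (RInt_opp (V:=R_CompleteNormedModule)) in Hpos.
    unfold opp in Hpos; simpl in Hpos.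
    assert (0 < - RInt (fun y => G y * (F1 y - F2 y)) 0 1).
    { apply Hpos; auto. intros s. apply continuity_pt_opp, continuity_pt_mult; auto.
      apply continuity_pt_minus; auto. }
    2:{ apply exc. intros s. apply continuity_pt_mult; auto. apply continuity_pt_minus; auto. }
    lra. }
  assert (HI : forall f, (forall x, continuity_pt f x) ->
     RInt (fun y => dphi alpha j (trig n c1 d1 y - V y) * f y) 0 1 =
     RInt (fun y => dphi alpha j (trig n c2 d2 y - V y) * f y) 0 1).
  { intros f _. apply RInt_ext. intros x Hx. rewrite Rmin_left, Rmax_right in Hx by lra.
    specialize (Heq x Hx). unfold F1, F2 in Heq. rewrite Heq. reflexivity. }
  assert (Hk : forall k, (1 <= k <= n)%nat -> c1 k = c2 k /\ d1 k = d2 k).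
  { intros k Hkn. pose proof (E1a k Hkn) as A1. pose proof (E2a k Hkn) as A2.
    pose proof (E1b k Hkn) as B1. pose proof (E2b k Hkn) as B2.
    rewrite (HI _ (Hcos k)), <- A2 in A1. rewrite (HI _ (Hsin k)), <- B2 in B1.
    specialize (HN k Hkn).
    assert (EA : p k * c1 k + q k * d1 k = p k * c2 k + q k * d2 k).
    { apply Rmult_eq_reg_r with (/ (p k ^ 2 + q k ^ 2)); [exact A1|].
      apply Rinv_neq_0_compat; lra. }
    assert (EB : p k * d1 k - q k * c1 k = p k * d2 k - q k * c2 k).
    { apply Rmult_eq_reg_r with (/ (p k ^ 2 + q k ^ 2)); [exact B1|].
      apply Rinv_neq_0_compat; lra. }
    assert (X1 : (p k ^ 2 + q k ^ 2) * (c1 k - c2 k) = 0).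
    { replace ((p k ^ 2 + q k ^ 2) * (c1 k - c2 k)) with
        (p k * ((p k * c1 k + q k * d1 k) - (p k * c2 k + q k * d2 k))
         - q k * ((p k * d1 k - q k * c1 k) - (p k * d2 k - q k * c2 k))) by ring.
      rewrite EA, EB. ring. }
    assert (X2 : (p k ^ 2 + q k ^ 2) * (d1 k - d2 k) = 0).
    { replace ((p k ^ 2 + q k ^ 2) * (d1 k - d2 k)) with
        (q k * ((p k * c1 k + q k * d1 k) - (p k * c2 k + q k * d2 k))
         + p k * ((p k * d1 k - q k * c1 k) - (p k * d2 k - q k * c2 k))) by ring.
      rewrite EA, EB. ring. }
    apply Rmult_integral in X1. apply Rmult_integral in X2. lra. }
  assert (H0 : c1 0%nat = c2 0%nat).
  { specialize (Heq (1/2) ltac:(lra)). unfold F1, F2, trig in Heq.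
    rewrite (trigsum_ext n c2 d2 c1 d1) in Heq.
    2:{ intros i Hi. destruct (Hk i Hi); split; auto. }
    lra. }
  split.
  - intros k Hkn. destruct k as [|k]; auto. apply Hk. lia.
  - intros k Hkn. apply Hk; auto.
Qed.
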